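(* Let $c\geq1$ be a natural number and let $X$ be a finite set of natural numbers, all greater than $2$, which is $(\omega\cdot c)$-large. Then every colouring $C\colon X\to\{0,\dots,c-1\}$ admits an $\omega$-large subset $H\subseteq X$ on which $C$ is constant.
   Context: Ordinals are notations below $\varepsilon_0$ in Cantor normal form; $\omega\cdot c$ denotes $\omega+\dots+\omega$ ($c$ times). Fundamental sequences: $0[x]=0$; $(\beta+1)[x]=\beta$; $(\beta+\omega)[x]=\beta+x$, meaning $\beta$ followed by $x$ copies of $1=\omega^0$. In general, for $\alpha=\omega^{\alpha_0}+\dots+\omega^{\alpha_n}$ with last exponent $\alpha_n=\delta+1$, $\alpha[x]=\omega^{\alpha_0}+\dots+\omega^{\alpha_{n-1}}+\omega^\delta\cdot x$. A finite set $X=\{x_0<\dots<x_{|X|-1}\}$ is $\alpha$-large if $\alpha[x_0][x_1]\cdots[x_{|X|-1}]=0$. *)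

(* Defs.v *)
From mathcomp Require Import all_boot.
Set Implicit Arguments. Unset Strict Implicit. Unset Printing Implicit Defensive.

(* Ordinal notations below epsilon_0 in Cantor normal form:
   [ON l] with l = [:: a_0; ...; a_n] denotes omega^a_0 + ... + omega^a_n
   (exponents nonincreasing for normal forms).  [ON [::]] is 0. *)
Inductive ON : Type := CNF : seq ON -> ON.

Definition on_zero : ON := CNF [::].
Definition is_zero (a : ON) : bool := if a is CNF [::] then true else false.
Definition on_one : ON := CNF [:: on_zero].
Definition omega : ON := CNF [:: on_one].
Definition omega_mul (c : nat) : ON := CNF (nseq c on_one).

(* Fundamental sequences a[x]:
   0[x] = 0; (b + omega^0)[x] = b;
   (b + omega^(d+1))[x] = b + omega^d * x  (x copies of omega^d);
   (b + omega^l)[x] = b + omega^(l[x]) for limit l. *)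
Fixpoint fs (a : ON) (x : nat) {struct a} : ON :=
  match a with
  | CNF l =>
    let step (b : ON) : seq ON :=
      match b with
      | CNF [::] => [::]
      | CNF (e :: le) =>
          if is_zero (last e le) then nseq x (CNF (belast e le))
          else [:: fs b x]
      end in
    let fix go (l : seq ON) : seq ON :=
      match l with
      | [::] => [::]
      | [:: b] => step b
      | b :: l' => b :: go l'
      end in
    CNF (go l)
  end.

Definition large (a : ON) (X : seq nat) : bool :=
  is_zero (foldl fs a (sort leq X)).

(* Main.v *)
Require Import Defs.
From mathcomp Require Import all_boot.
From mathcomp Require Import zify.

Definition on_seq (a : ON) : seq ON := let: CNF l := a in l.

Lemma fs_cons2 b b' l x :
  fs (CNF (b :: b' :: l)) x = CNF (b :: on_seq (fs (CNF (b' :: l)) x)).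
Proof. reflexivity. Qed.

Lemma fs_rcons l b x :
  fs (CNF (rcons l b)) x = CNF (l ++ on_seq (fs (CNF [:: b]) x)).
Proof.
elim: l => [|a l IH] //.
rewrite rcons_cons.
case El: (rcons l b) => [|b' l']; first by move: (congr1 size El); rewrite size_rcons.
by rewrite fs_cons2 -El IH.
Qed.

Definition rep (p : nat * nat) : ON := CNF (nseq p.1 on_one ++ nseq p.2 on_zero).

Definition step (p : nat * nat) (x : nat) : nat * nat :=
  let: (k, r) := p in
  if r is r'.+1 then (k, r') else if k is k'.+1 then (k', x) else (0, 0).

Lemma nseq_rcons (T : Type) n (a : T) : nseq n.+1 a = rcons (nseq n a) a.
Proof. by elim: n => [|n IH] //=; rewrite -IH. Qed.

Lemma rep_eq k r : rep (k, r) = CNF (nseq k on_one ++ nseq r on_zero).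
Proof. by []. Qed.

Lemma fs_rep p x : fs (rep p) x = rep (step p x).
Proof.
case: p => [k [|r]].
- case: k => [|k] //.
  rewrite rep_eq cats0 nseq_rcons fs_rcons.
  by [].
- rewrite rep_eq nseq_rcons -rcons_cat fs_rcons cats0.
  by [].
Qed.

Lemma foldl_rep p s : foldl fs (rep p) s = rep (foldl step p s).
Proof.
elim: s p => [|x s IH] p //.
change (foldl fs (fs (rep p) x) s = rep (foldl step (step p x) s)).
by rewrite fs_rep IH.
Qed.

Lemma is_zero_rep p : is_zero (rep p) = (p == (0, 0)).
Proof. by case: p => [[|k] [|r]]. Qed.

Lemma foldl_step0 r t : foldl step (0, r) t = (0, r - size t).
Proof.
elim: t r => [|x t IH] r /=; first by rewrite subn0.
case: r => [|r] /=; first by rewrite IH.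
by rewrite IH subSS.
Qed.

Lemma large_omega H : sorted leq H -> large omega H = (head 0 H < size H).
Proof.
move=> sH; rewrite /large (sorted_sort leq_trans sH).
have -> : omega = rep (1, 0) by [].
rewrite foldl_rep is_zero_rep.
case: H sH => [|y t] //= _.
rewrite foldl_step0 /= xpair_eqE /=; apply/eqP/idP; lia.
Qed.

Section Main.
Variables (c : nat) (C : nat -> 'I_c).
Hypothesis c_pos : 0 < c.

Definition NL (rest : seq nat) (D : seq 'I_c) :=
  forall i, i \notin D ->
    size [seq y <- rest | C y == i] <= head 0 [seq y <- rest | C y == i].

Lemma NL_cons x rest D : NL (x :: rest) D -> C x \in D -> NL rest D.
Proof.
move=> h xD i iD; have := h i iD; rewrite /= ifF //.
by apply/negbTE; apply: contra iD => /eqP <-.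
Qed.

Lemma NL_new x rest D : NL (x :: rest) D -> NL rest (C x :: D).
Proof.
move=> h i; rewrite in_cons negb_or => /andP[ne iD]; have := h i iD.
by rewrite /= ifF //; apply/negbTE; rewrite eq_sym.
Qed.

Definition cnt (D : seq 'I_c) rest := count (fun y => C y \in D) rest.
Definition cntc (i : 'I_c) rest := count (fun y => C y == i) rest.

Lemma cnt_in x rest D : C x \in D -> cnt D (x :: rest) = (cnt D rest).+1.
Proof. by move=> h; rewrite /cnt /= h. Qed.

Lemma cnt_out x rest D : C x \notin D -> cnt D (x :: rest) = cnt D rest.
Proof. by move=> h; rewrite /cnt /= (negbTE h). Qed.

Lemma NL_head x rest D : NL (x :: rest) D -> C x \notin D ->
  (cntc (C x) rest).+1 <= x.
Proof. by move=> h xD; have := h _ xD; rewrite /= eqxx /= size_filter. Qed.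

Lemma count_new x D rest :
  cnt (C x :: D) rest <= cntc (C x) rest + cnt D rest.
Proof.
rewrite /cnt /cntc.
elim: rest => [|y rest IH] //=; rewrite in_cons.
case: (C y == C x); case: (C y \in D) => /=; rewrite ?add1n ?add0n ?addSn ?addnS; by [apply: (leq_trans IH); rewrite ?leqnSn ?leqW].
Qed.

Lemma main rest : forall (D : seq 'I_c) k r M,
  uniq D -> path leq M rest -> NL rest D -> k <= c -> size D <= c ->
  c - size D <= k ->
  cnt D rest + (c - k) <= r + (k + size D - c) * M ->
  foldl step (k, r) rest != (0, 0).
Proof.
elim: rest => [|x rest IH] D k r M uD pth nl kc Dc uk inv.
  apply/negP => /eqP [k0 r0]; subst k r.
  have e : size D - c = 0 by lia.
  by move: inv; rewrite add0n e mul0n /=; lia.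
move: pth => /= /andP [Mx pth].
have hM : (k + size D - c) * M <= (k + size D - c) * x by rewrite leq_mul2l Mx orbT.
case: (boolP (C x \in D)) => xD.
- have nl' := NL_cons _ _ _ nl xD.
  move: inv; rewrite (cnt_in _ _ _ xD) => inv.
  case: r inv => [|r] inv.
  + case: k kc uk inv hM => [|k] kc uk inv hM.
    * have e : size D - c = 0 by lia.
      by move: inv; rewrite add0n e mul0n; lia.
    * have uk' : c - size D <= k.
        case E: (k.+1 + size D - c) inv => [|n] inv; last by lia.
        by move: inv; rewrite mul0n; lia.
      rewrite /=; apply: (IH D k x x) => //; try lia.
      have e : k.+1 + size D - c = (k + size D - c).+1 by lia.
      move: hM inv; rewrite e !mulSn; lia.
  + rewrite /=; apply: (IH D k r x) => //; lia.
- have nl' := NL_new _ _ _ nl.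
  have hx := NL_head _ _ _ nl xD.
  have cn := count_new x D rest.
  have uD' : uniq (C x :: D) by rewrite /= xD uD.
  have Dc' : size (C x :: D) <= c.
    have := uniq_leq_size uD' (fun y _ => mem_enum 'I_c y).
    by rewrite -cardE card_ord.
  move: inv; rewrite (cnt_out _ _ _ xD) => inv.
  case: r inv => [|r] inv.
  + case: k kc uk inv hM => [|k] kc uk inv hM.
    * have e : size D - c = 0 by lia.
      by move: inv; rewrite add0n e mul0n; lia.
    * rewrite /=; apply: (IH (C x :: D) k x x) => //; rewrite /=; try lia.
  + rewrite /=; apply: (IH (C x :: D) k r x) => //; rewrite /=; try lia.
    have e : k + (size D).+1 - c = (k + size D - c).+1 by lia.
    by move: hM inv; rewrite e !mulSn; lia.
Qed.

End Main.

Theorem lemma4p1 (c : nat) (X : seq nat) :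
  1 <= c -> uniq X -> (forall x, x \in X -> 2 < x) ->
  large (omega_mul c) X ->
  forall C : nat -> 'I_c,
  exists H : seq nat,
    [/\ uniq H, {subset H <= X}, large omega H &
        exists i : 'I_c, forall x, x \in H -> C x = i].
Proof.
move=> c1 uX _ lX C.
set s := sort leq X.
have ss : sorted leq s by exact: (sort_sorted leq_total).
case: (boolP [exists i : 'I_c, large omega [seq y <- s | C y == i]]).
  move=> /existsP [i li]; exists [seq y <- s | C y == i]; split => //.
  - by rewrite filter_uniq // sort_uniq.
  - by move=> y; rewrite mem_filter mem_sort => /andP[].
  - by exists i => y; rewrite mem_filter => /andP[/eqP].
move=> /existsPn nl.
have NLs : @NL c C s [::].
  move=> i _; have := nl i.
  rewrite large_omega; last exact: (sorted_filter leq_trans _ ss).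
  by rewrite -leqNgt.
have p0 : path leq 0 s by move: ss; rewrite /s; case: (sort leq X).
have := @main c C c1 s [::] c 0 0 (erefl _) p0 NLs (leqnn c) (leq0n c).
rewrite subn0 subnn addn0 muln0 => /(_ (leqnn c)).
have h0 : cnt c C [::] s = 0 by rewrite /cnt /s; elim: (sort leq X).
rewrite h0 => /(_ (leqnn 0)).
move: lX; rewrite /large.
have -> : omega_mul c = rep (c, 0) by rewrite rep_eq cats0.
by rewrite foldl_rep is_zero_rep => ->.
Qed.
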